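(* Let $N:\mathbb{R}\to[0,1]$ be a monotone nondecreasing cumulative distribution function whose density has bounded support $[A,B]$. Then for every $\epsilon>0$ there exist support bounds $A^*<B^*$ and parameters $\theta$ of a PNN such that $$\sup_{x\in[A,B]}\bigl|N_\theta(x)-N(x)\bigr|<\epsilon,$$ where $N_\theta$ is the normalized PNN cdf with support bounds $[A^*,B^*]$.
   Context: Let $\sigma(t)=1/(1+e^{-t})$. A PNN (probabilistically normalized network) of depth $L\ge 2$ on inputs $z\in\mathbb{R}$ is the function $F_\theta$ defined by $a_0=z$, $a_\ell=\sigma(W_\ell^{T}a_{\ell-1}+c_\ell)$ for $\ell=1,\dots,L-1$ (entrywise sigmoid), and $F_\theta(z)=\beta^{T}a_{L-1}$, where every weight matrix $W_\ell$ has strictly positive entries, the biases $c_\ell$ are arbitrary real vectors, and $\beta$ is a probability vector with strictly positive entries (widths arbitrary); $\theta$ denotes all these parameters. Given support bounds $A^*<B^*$, the normalized PNN cdf is $N_\theta(x)=\frac{F_\theta(x)-F_\theta(A^* )}{F_\theta(B^* )-F_\theta(A^* )}$. *)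

(* Defs.v *)
From HB Require Import structures.
From mathcomp Require Import all_boot all_order all_algebra.
From mathcomp Require Import all_classical all_reals all_analysis.
Unset Strict Implicit. Unset Printing Implicit Defensive.
Import Order.TTheory GRing.Theory Num.Theory.
Local Open Scope ring_scope.

Definition sigmoid {R : realType} (t : R) : R := (1 + expR (- t))^-1.

(* pnn_layers k n a : a : R -> 'cV_n is the activation a_k of the k-th layer
   of a network with input a_0 = z (width 1) and hidden layers
   a_l = sigma(W_l^T a_{l-1} + c_l), every W_l with strictly positive entries,
   c_l arbitrary. *)
Inductive pnn_layers (R : realType) : nat -> forall n : nat, (R -> 'cV[R]_n) -> Prop :=
| pnn_input : pnn_layers R 0 1 (fun z => const_mx z)
| pnn_layer (k n m : nat) (a : R -> 'cV[R]_n) (W : 'M[R]_(n, m)) (c : 'cV[R]_m) :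
    pnn_layers R k n a ->
    (forall i j, 0 < W i j) ->
    pnn_layers R k.+1 m (fun z => map_mx sigmoid (W^T *m a z + c)).

Definition is_PNN {R : realType} (F : R -> R) : Prop :=
  exists (L n : nat) (a : R -> 'cV[R]_n) (beta : 'cV[R]_n),
    (2 <= L)%N /\ pnn_layers R L.-1 n a /\
    (forall i, 0 < beta i ord0) /\ \sum_i beta i ord0 = 1 /\
    (forall z, F z = (beta^T *m a z) ord0 ord0).

Definition normalized_cdf {R : realType} (F : R -> R) (As Bs x : R) : R :=
  (F x - F As) / (F Bs - F As).

(* Main.v *)
Require Import Defs.
From HB Require Import structures.
From mathcomp Require Import all_boot all_order all_algebra.
From mathcomp Require Import all_classical all_reals all_analysis measurable_realfun.
From mathcomp Require Import ring lra.
Import Order.TTheory GRing.Theory Num.Theory.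
Local Open Scope ring_scope.

Lemma grid (R : realType) (N f : R -> R) (A B : R) :
  A < B ->
  measurable_fun setT f ->
  (forall t, 0 <= f t) ->
  (forall t, t < A \/ B < t -> f t = 0) ->
  (\int[lebesgue_measure]_(t in setT) (f t)%:E = 1)%E ->
  (forall x, N x = fine (\int[lebesgue_measure]_(t in `]-oo, x]%classic) (f t)%:E)) ->
  forall v, 0 <= v <= 1 -> exists c, N c = v.
Proof.
move=> AB mf f0 fout f1 NE v v01.
pose a := A - 1.
have aA : a < A by rewrite /a ltrBlDr ltrDl.
have aB : a <= B by rewrite ltW // (lt_trans aA).
pose P x := parameterized_integral lebesgue_measure a x f.
have NP x : a <= x -> N x = P x.
  move=> ax; rewrite NE /P /parameterized_integral /Rintegral; congr fine.
  rewrite [LHS]integral_mkcond [RHS]integral_mkcond; apply: eq_integral => t _.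
  rewrite /patch; have [ta|ta] := ltP t a.
    by rewrite fout; [case: ifP; case: ifP | left; exact: lt_trans ta aA].
  by rewrite !mem_setE; rewrite !in_itv /= ta.
have Na : N a = 0.
  rewrite NE integral0_eq //= => t; rewrite in_itv /= => ta.
  by rewrite fout //; left; apply: le_lt_trans ta aA.
have NB : N B = 1.
  rewrite NE integral_mkcond (_ : _ \_ _ = (fun t => (f t)%:E)) ?f1 //.
  apply/funext => t; rewrite /patch; case: ifP => // /negbT.
  rewrite mem_setE in_itv /= -ltNge => Bt.
  by rewrite fout //; right.
have intf : lebesgue_measure.-integrable `[a, B] (EFin \o f).
  apply/integrableP; split.
    by apply/measurable_EFinP; apply: measurable_funTS.
  apply: (@le_lt_trans _ _ 1%E); last exact: ltry.
  rewrite -f1.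
  apply: (@le_trans _ _ (\int[lebesgue_measure]_(x in setT) `|(EFin \o f) x|)%E).
    apply: ge0_subset_integral => //.
    by apply: measurableT_comp => //; apply/measurable_EFinP.
  rewrite le_eqVlt; apply/orP; left; apply/eqP; apply: eq_integral => t _ /=.
  by rewrite ger0_norm.
have cP := parameterized_integral_continuous aB intf.
have [|c cab Pc] := @IVT _ P a B v aB cP.
  by rewrite -NP // -NP // Na NB minEle maxEle ler01.
exists c; rewrite NP //.
by move: cab; rewrite in_itv /= => /andP[].
Qed.

Section S.
Variable R : realType.

Lemma sig_gt0 (u : R) : 0 < sigmoid u.
Proof. by rewrite /sigmoid invr_gt0 addr_gt0 // expR_gt0. Qed.

Lemma sig_lt1 (u : R) : sigmoid u < 1.
Proof.
rewrite /sigmoid invf_lt1 ?addr_gt0 ?expR_gt0 //.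
by rewrite ltrDl expR_gt0.
Qed.

Lemma sig_le (u v : R) : u <= v -> sigmoid u <= sigmoid v.
Proof.
move=> uv; rewrite /sigmoid lef_pV2 ?posrE ?addr_gt0 ?expR_gt0 //.
by rewrite lerD2l ler_expR lerN2.
Qed.

Lemma sig_hi (d u : R) : 0 < d -> - ln d <= u -> 1 - d <= sigmoid u.
Proof.
move=> d0 du.
have e : expR (- u) <= d.
  by rewrite -[X in _ <= X](@lnK _ d) ?posrE // ler_expR lerNl.
have e0 := expR_gt0 (- u).
rewrite /sigmoid -div1r ler_pdivlMr ?addr_gt0 //.
nra.
Qed.

Lemma sig_lo (d u : R) : 0 < d -> u <= ln d -> sigmoid u <= d.
Proof.
move=> d0 du.
have e : d^-1 <= expR (- u).
  by rewrite -[X in X^-1 <= _](@lnK _ d) ?posrE // -expRN ler_expR lerN2.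
have e0 := expR_gt0 (- u).
rewrite /sigmoid -div1r ler_pdivrMr ?addr_gt0 //.
have : d * d^-1 <= d * expR (-u) by rewrite ler_pM2l.
rewrite divff ?gt_eqF //.
nra.
Qed.

Lemma norm_err (g0 gK gx n e d : R) : 0 <= g0 <= d -> 1 - d <= gK <= 1 -> 0 <= gx <= 1 ->
  0 < d -> d <= 1/4 -> `|gx - n| <= e -> `|(gx - g0) / (gK - g0) - n| <= e + 2 * d.
Proof.
move=> /andP[g00 g0d] /andP[gK1 gK2] /andP[gx0 gx1] d0 d4 hn.
have D0 : 1/2 <= gK - g0 by lra.
set q := (gx - g0) / (gK - g0).
have hq : q * (gK - g0) = gx - g0 by rewrite /q mulfVK // gt_eqF //; lra.
have : `|q - gx| <= 2 * d.
  rewrite ler_norml; apply/andP; split; nra.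
move: hn; rewrite !ler_norml => /andP[? ?] /andP[? ?]; apply/andP; split; lra.
Qed.


Lemma construct (N : R -> R) (K : nat) (s : nat -> R) (d : R) :
  (0 < K)%N -> 0 < d -> d <= 1/4 -> {homo N : x y / x <= y} ->
  (forall j, (j <= K)%N -> N (s j) = j%:R / K%:R) ->
  exists F, s 0%N < s K /\ is_PNN F /\
   (forall x, 0 <= N x <= 1 ->
      `|normalized_cdf F (s 0%N) (s K) x - N x| <= 2 / K%:R + d + 2 * d).
Proof.
move=> K0 d0 d4 Nh sN.
have Nlt x y : N x < N y -> x < y.
  by move=> h; rewrite ltNge; apply/negP => /Nh; rewrite leNgt h.
have Kpos : 0 < K%:R :> R by rewrite ltr0n.
have slt i j : (i < j)%N -> (j <= K)%N -> s i < s j.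
  move=> ij jK; apply: Nlt; rewrite !sN //; last exact: ltnW (leq_trans ij jK).
  by rewrite ltr_pM2r ?invr_gt0 // ltr_nat.
have sle i j : (i <= j)%N -> (j <= K)%N -> s i <= s j.
  rewrite leq_eqVlt => /orP[/eqP -> //|ij] jK; exact/ltW/slt.
pose L := - ln d.
have L0 : 0 < L by rewrite /L oppr_gt0 ln_lt0 // d0 /=; lra.
pose w k := 2 * L / (s k.+1 - s k).
pose t k := (s k + s k.+1) / 2.
have w0 k : (k < K)%N -> 0 < w k.
  by move=> kK; rewrite /w divr_gt0 ?mulr_gt0 // subr_gt0 slt.
pose term k z := sigmoid (w k * (z - t k)).
pose G z := \sum_(0 <= k < K) K%:R^-1 * term k z.
pose W : 'M[R]_(1, K) := \matrix_(i, j) w j.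
pose c : 'cV[R]_K := \col_j (- (w j * t j)).
pose a z := map_mx sigmoid (W^T *m const_mx z + c).
pose beta : 'cV[R]_K := const_mx K%:R^-1.
pose F z := (beta^T *m a z) ord0 ord0.
have FG z : F z = G z.
  rewrite /F /G big_mkord mxE; apply: eq_bigr => j _.
  by rewrite /beta /a /term /W /c !mxE big_ord1 !mxE mulrBr.
have PF : is_PNN F.
  exists 2%N, K, a, beta; split; first by [].
  split.
    have Wp : forall i j, 0 < W i j by move=> i j; rewrite mxE w0.
    exact: (@pnn_layer R 0 1 K (fun z => const_mx z) W c (pnn_input R) Wp).
  split; first by move=> i; rewrite mxE invr_gt0.
  split; last by [].
  rewrite (eq_bigr (fun=> K%:R^-1)); last by move=> i _; rewrite mxE.
  by rewrite sumr_const card_ord -[LHS]mulr_natr mulVf // gt_eqF.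
have hi k j : (k < j)%N -> (j <= K)%N -> 1 - d <= term k (s j).
  move=> kj jK; apply: sig_hi => //; rewrite -/L.
  have kK : (k < K)%N := leq_trans kj jK.
  have g0 : 0 < s k.+1 - s k by rewrite subr_gt0 slt.
  have := sle _ _ kj jK => sj.
  have -> : L = w k * ((s k.+1 - s k) / 2).
    by rewrite /w mulrA divfK ?gt_eqF // mulrAC divff // mul1r.
  rewrite ler_pM2l ?w0 // /t; lra.
have lo k j : (j <= k)%N -> (k < K)%N -> term k (s j) <= d.
  move=> jk kK; apply: sig_lo => //.
  rewrite -[ln d]opprK -/L.
  have g0 : 0 < s k.+1 - s k by rewrite subr_gt0 slt.
  have := sle _ _ jk (ltnW kK) => sj.
  have -> : L = w k * ((s k.+1 - s k) / 2).
    by rewrite /w mulrA divfK ?gt_eqF // mulrAC divff // mul1r.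
  rewrite -[X in _ <= X]mulrN ler_pM2l ?w0 // /t; lra.
have Gmono x y : x <= y -> G x <= G y.
  move=> xy; apply: ler_sum_nat => k /andP[_ kK] /=.
  rewrite ler_pM2l ?invr_gt0 //; apply: sig_le.
  rewrite ler_pM2l ?w0 //; lra.
have G01 z : 0 <= G z <= 1.
  apply/andP; split.
    by apply: sumr_ge0 => k _; rewrite mulr_ge0 ?invr_ge0 ?ltW ?sig_gt0.
  apply: (le_trans (ler_sum_nat (G:=fun=> K%:R^-1) _)).
    move=> k _ /=; rewrite -[X in _ <= X]mulr1 ler_pM2l ?invr_gt0 //.
    exact/ltW/sig_lt1.
  by rewrite sumr_const_nat subn0 -[K%:R^-1 *+ K]mulr_natr mulVf // gt_eqF.
have grid j : (j <= K)%N -> j%:R / K%:R - d <= G (s j) <= j%:R / K%:R + d.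
  move=> jK; rewrite /G (big_cat_nat (leq0n j) jK) /=.
  have S1l : j%:R / K%:R * (1 - d) <= \sum_(0 <= k < j) K%:R^-1 * term k (s j).
    apply: le_trans (ler_sum_nat (F:= fun=> K%:R^-1 * (1-d)) _).
      by rewrite sumr_const_nat subn0 -[K%:R^-1 * (1 - d) *+ j]mulr_natr [X in _ <= X]mulrC [X in _ <= X]mulrA lexx.
    move=> k /andP[_ kj] /=; rewrite ler_pM2l ?invr_gt0 //; exact: hi.
  have S1u : \sum_(0 <= k < j) K%:R^-1 * term k (s j) <= j%:R / K%:R.
    apply: le_trans (ler_sum_nat (G:= fun=> K%:R^-1) _) _.
      move=> k _ /=; rewrite -[X in _ <= X]mulr1 ler_pM2l ?invr_gt0 //.
      exact/ltW/sig_lt1.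
    by rewrite sumr_const_nat subn0 -[K%:R^-1 *+ j]mulr_natr [X in X <= _]mulrC lexx.
  have S2l : 0 <= \sum_(j <= k < K) K%:R^-1 * term k (s j).
    by apply: sumr_ge0 => k _; rewrite mulr_ge0 ?invr_ge0 ?ltW ?sig_gt0.
  have S2u : \sum_(j <= k < K) K%:R^-1 * term k (s j) <= d.
    apply: le_trans (ler_sum_nat (G:= fun=> K%:R^-1 * d) _) _.
      move=> k /andP[jk kK] /=; rewrite ler_pM2l ?invr_gt0 //; exact: lo.
    rewrite sumr_const_nat -[K%:R^-1 * d *+ (K - j)]mulr_natr.
    apply: (@le_trans _ _ (K%:R^-1 * d * K%:R)).
      by apply: ler_wpM2l; [rewrite mulr_ge0 ?invr_ge0 ?ltW | rewrite ler_nat leq_subr].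
    by rewrite mulrAC mulVf ?mul1r // gt_eqF.
  have jK1 : j%:R / K%:R <= 1 :> R by rewrite ler_pdivrMr // mul1r ler_nat.
  have jK0 : 0 <= j%:R / K%:R :> R by rewrite divr_ge0.
  apply/andP; split; nra.
have err x : 0 <= N x <= 1 -> `|G x - N x| <= 2 / K%:R + d.
  move=> /andP[y0 y1]; set y := N x.
  have Ky0 : 0 <= y * K%:R by rewrite mulr_ge0 // ltW.
  pose j := Num.truncn (y * K%:R).
  have /andP[jl ju] := truncn_itv Ky0; rewrite -/j in jl ju.
  have jK : (j <= K)%N.
    rewrite /j truncn_le_nat -natr1.
    have : y * K%:R <= K%:R by rewrite -[X in _ <= X]mul1r ler_wpM2r // ltW.
    lra.
  have jy : j%:R / K%:R <= y by rewrite ler_pdivrMr.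
  have yj : y < j.+1%:R / K%:R by rewrite ltr_pdivlMr.
  have Gx := G01 x.
  clearbody j; clear jl ju.
  have up : G x <= y + 1 / K%:R + d.
    case: (ltnP j K) => [jlt|jge].
      have xs : x < s j.+1 by apply: Nlt; rewrite sN.
      have /andP[_ g2] := grid j.+1 jlt.
      have := Gmono _ _ (ltW xs).
      move: g2 yj; rewrite -natr1 mulrDl; lra.
    have jeK : j = K by apply/eqP; rewrite eqn_leq jK jge.
    move: jy; rewrite jeK divff ?gt_eqF //.
    have : 0 <= 1 / K%:R :> R by rewrite divr_ge0 ?ler0n.
    lra.
  have lw : y - 2 / K%:R - d <= G x.
    move: yj jy jK; case: j => [|i] yj jy jK.
      have : 0 <= K%:R^-1 :> R by rewrite invr_ge0 ler0n.
      lra.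
    have iK : (i <= K)%N by apply: ltnW.
    have xs : s i < x.
      apply: Nlt; rewrite sN // -/y; apply: lt_le_trans jy.
      by rewrite ltr_pM2r ?invr_gt0 // ltr_nat.
    have /andP[g1 _] := grid i iK.
    have := Gmono _ _ (ltW xs).
    move: g1 yj; rewrite -!natr1 -addrA mulrDl; lra.
  rewrite ler_norml; apply/andP; split; lra.
exists F; split; first exact: slt.
split; first exact: PF.
move=> x hx; rewrite /normalized_cdf !FG.
have /andP[g0l g0u] := grid 0%N (leq0n K).
have /andP[gKl gKu] := grid K (leqnn K).
rewrite mul0r in g0l g0u; rewrite divff ?gt_eqF // in gKl gKu.
apply: norm_err => //; last exact: err.
  by rewrite (andP (G01 _)).1; lra.
by rewrite (andP (G01 _)).2 andbT.
Qed.
End S.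

Theorem lemma5 (R : realType) (N f : R -> R) (A B : R) :
  A < B ->
  (* N maps into [0,1] and is nondecreasing *)
  (forall x, 0 <= N x <= 1) ->
  {homo N : x y / x <= y} ->
  (* f is a probability density with support in [A,B] *)
  measurable_fun setT f ->
  (forall t, 0 <= f t) ->
  (forall t, t < A \/ B < t -> f t = 0) ->
  (\int[lebesgue_measure]_(t in setT) (f t)%:E = 1)%E ->
  (* N is the cdf of the density f *)
  (forall x, N x = fine (\int[lebesgue_measure]_(t in `]-oo, x]%classic) (f t)%:E)) ->
  forall eps : R, 0 < eps ->
  exists (As Bs : R) (F : R -> R),
    As < Bs /\ is_PNN F /\
    exists d : R, d < eps /\
      (forall x, A <= x <= B -> `|normalized_cdf F As Bs x - N x| <= d).
Proof.
move=> AB N01 Nh mf f0 fout f1 NE eps e0.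
pose K := (Num.truncn (4 / eps)).+1.
have K0 : (0 < K)%N by [].
have Kpos : 0 < K%:R :> R by rewrite ltr0n.
have Kgt : 4 / eps < K%:R := truncnS_gt _.
pose d := Num.min (1/4) (eps/8).
have d0 : 0 < d by rewrite /d lt_min; apply/andP; split; [lra | lra].
have d4 : d <= 1/4 by rewrite /d ge_min lexx.
have d8 : d <= eps/8 by rewrite /d ge_min lexx orbT.
have hs : forall j, exists c, (j <= K)%N -> N c = j%:R / K%:R.
  move=> j; case: (leqP j K) => jK; last by exists 0.
  have [|c hc] := @grid R N f A B AB mf f0 fout f1 NE (j%:R / K%:R).
    apply/andP; split; first by rewrite divr_ge0.
    by rewrite ler_pdivrMr // mul1r ler_nat.
  by exists c.
have [s hs'] := choice hs.
have [F [sl [PF herr]]] := @construct R N K s d K0 d0 d4 Nh (fun j jK => hs' j jK).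
exists (s 0%N), (s K), F; split => //; split => //.
exists (2 / K%:R + d + 2 * d); split.
  have h1 : 4 < K%:R * eps by rewrite -ltr_pdivrMr.
  have h2 : 2 / K%:R < eps / 2.
    by rewrite ltr_pdivrMr // mulrAC ltr_pdivlMr //; lra.
  lra.
by move=> x _; apply: herr; exact: N01.
Qed.
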